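(* Let $n\le d$, let $\{u_i\}_{i=1}^n$ be an orthonormal family in $\mathbb{C}^d$, let $\{e_i\}$ be the standard basis of $\mathbb{C}^n$, and let $K=\sum_{i=1}^n|e_i\rangle\langle u_i\otimes\overline{u_i}|$. If $\rho$ is a PPT bipartite PSD matrix on $\mathbb{C}^d\otimes\mathbb{C}^d$ whose range is contained in the symmetric subspace $\mathbb{C}^d\vee\mathbb{C}^d$, then $Z^\Gamma_K(\rho)=K\rho^\Gamma K^*\in\mathsf{DNN}_n$.
   Context: $\rho^\Gamma$ is the partial transpose on the second factor (standard basis), $\overline{u}$ is entrywise complex conjugation, and $\rho$ is PPT if $\rho\ge0$ and $\rho^\Gamma\ge0$. The symmetric subspace $\mathbb{C}^d\vee\mathbb{C}^d$ is the $+1$ eigenspace of the flip operator $F=\sum_{i,j}|ij\rangle\langle ji|$; range in it is equivalent to $\rho F=F\rho=\rho$. $\mathsf{DNN}_n=\mathcal{M}_n^+\cap\mathcal{M}_n(\mathbb{R}_+)$ is the cone of doubly nonnegative matrices (PSD with entrywise nonnegative entries). *)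

(* Defs.v *)
(* Complex scalars: an arbitrary numClosedFieldType C
   (e.g. algC or complex R); order "0 <= z" means z is real and nonnegative. *)
From HB Require Import structures.
From mathcomp Require Import all_boot all_order all_algebra.
From mathcomp Require Import mxtens.
Set Implicit Arguments. Unset Strict Implicit. Unset Printing Implicit Defensive.
Import Order.TTheory GRing.Theory Num.Theory.
Local Open Scope ring_scope.

Section Defs.
Variable C : numClosedFieldType.

Definition adjmx m n (A : 'M[C]_(m, n)) : 'M[C]_(n, m) := (map_mx Num.conj A)^T.

Definition psdmx m (A : 'M[C]_m) : Prop :=
  adjmx A = A /\ forall v : 'cV[C]_m, 0 <= (adjmx v *m A *m v) 0 0.

Definition DNN m (A : 'M[C]_m) : Prop :=
  psdmx A /\ forall i j, 0 <= A i j.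

(* C^d (x) C^d is indexed by 'I_(d*d) via mxtens_index (i, j) = |ij> *)
(* partial transpose on the second factor: <ij|rho^G|kl> = <il|rho|kj> *)
Definition ptrans d (rho : 'M[C]_(d * d)) : 'M[C]_(d * d) :=
  \matrix_(a, b) rho (mxtens_index ((mxtens_unindex a).1, (mxtens_unindex b).2))
                     (mxtens_index ((mxtens_unindex b).1, (mxtens_unindex a).2)).

Definition PPT d (rho : 'M[C]_(d * d)) : Prop := psdmx rho /\ psdmx (ptrans rho).

Definition flipmx d : 'M[C]_(d * d) :=
  \matrix_(a, b) (a == mxtens_index ((mxtens_unindex b).2, (mxtens_unindex b).1))%:R.

(* symmetric subspace C^d v C^d: the +1 eigenspace of F *)
Definition in_sym d (v : 'cV[C]_(d * d)) : Prop := flipmx d *m v = v.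

Definition range_in_sym d (rho : 'M[C]_(d * d)) : Prop :=
  forall v : 'cV[C]_(d * d), in_sym (rho *m v).

(* orthonormal family u_1..u_n in C^d given as the columns of U *)
Definition orthonormal_cols d n (U : 'M[C]_(d, n)) : Prop := adjmx U *m U = 1%:M.

(* K = sum_i |e_i><u_i (x) conj(u_i)| : row i of K is (u_i (x) conj u_i)^* *)
Definition Kmx d n (U : 'M[C]_(d, n)) : 'M[C]_(n, d * d) :=
  \matrix_(i, k) (adjmx (col i U *t map_mx Num.conj (col i U))) 0 k.

Definition ZGammaK d n (U : 'M[C]_(d, n)) (rho : 'M[C]_(d * d)) : 'M[C]_n :=
  Kmx U *m ptrans rho *m adjmx (Kmx U).
End Defs.

(* Main.v *)
Require Import Defs.
From mathcomp Require Import all_boot all_order all_algebra.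
From mathcomp Require Import mxtens ring.
Import Order.TTheory GRing.Theory Num.Theory.
Local Open Scope ring_scope.

Local Notation ix i j := (@mxtens_index _ _ (i, j)).

Section Aux.
Variable C : numClosedFieldType.

Lemma adjmxE m n (A : 'M[C]_(m, n)) i j : adjmx A i j = (A j i)^*.
Proof. by rewrite !mxE. Qed.

Lemma adjmx_mul m n p (A : 'M[C]_(m, n)) (B : 'M[C]_(n, p)) :
  adjmx (A *m B) = adjmx B *m adjmx A.
Proof. by rewrite /adjmx map_mxM trmx_mul. Qed.

Lemma adjmxK m n (A : 'M[C]_(m, n)) : adjmx (adjmx A) = A.
Proof. by apply/matrixP => i j; rewrite !adjmxE conjCK. Qed.

Lemma psd_congr m n (A : 'M[C]_m) (B : 'M[C]_(n, m)) :
  psdmx A -> psdmx (B *m A *m adjmx B).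
Proof.
move=> [hA1 hA2]; split.
  by rewrite !adjmx_mul adjmxK hA1 mulmxA.
move=> v; have := hA2 (adjmx B *m v).
by rewrite adjmx_mul adjmxK !mulmxA.
Qed.

Lemma sum_tens m n (F : 'I_(m * n) -> C) :
  \sum_k F k = \sum_i \sum_j F (mxtens_index (i, j)).
Proof.
rewrite (reindex (@mxtens_index m n)) /=; last first.
  by exists (@mxtens_unindex m n) => k _; rewrite (mxtens_indexK, mxtens_unindexK).
by rewrite pair_big; apply: eq_bigr => -[].
Qed.



Lemma ix_eq m n (i k : 'I_m) (j l : 'I_n) :
  (ix i j == ix k l) = (i == k) && (j == l).
Proof.
by rewrite (inj_eq (can_inj (@mxtens_indexK m n))) xpair_eqE.
Qed.

Lemma flip_mulE d k (M : 'M[C]_(d * d, k)) (i j : 'I_d) (b : 'I_k) :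
  (flipmx C d *m M) (ix i j) b = M (ix j i) b.
Proof.
rewrite mxE sum_tens (bigD1 j) //= (bigD1 i) //= mxE mxtens_indexK /=.
rewrite ix_eq !eqxx /= mul1r.
rewrite big1 ?addr0; last first.
  by move=> q hq; rewrite mxE mxtens_indexK /= ix_eq eqxx andbT eq_sym (negbTE hq) mul0r.
rewrite big1 ?addr0 //.
move=> p hp; rewrite big1 // => q _.
by rewrite mxE mxtens_indexK /= ix_eq [j == p]eq_sym (negbTE hp) andbF mul0r.
Qed.

Lemma rho_swap d (rho : 'M[C]_(d * d)) :
  psdmx rho -> range_in_sym rho ->
  forall a (i j : 'I_d), rho a (ix j i) = rho a (ix i j).
Proof.
move=> [h1 _] hs a i j.
have H x y b : rho (ix y x) b = rho (ix x y) b.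
  have E : flipmx C d *m (rho *m delta_mx b 0) = rho *m delta_mx b 0 := hs _.
  have := congr1 (fun M : 'M[C]_(d * d, 1) => M (ix x y) 0) E.
  by rewrite flip_mulE -colE !mxE.
by rewrite -h1 !adjmxE H.
Qed.


Lemma Kmx_ix d n (U : 'M[C]_(d, n)) i (p1 p2 : 'I_d) :
  Kmx U i (ix p1 p2) = (U p1 i)^* * U p2 i.
Proof. by rewrite !mxE mxtens_indexK /= rmorphM /= conjCK. Qed.

Lemma Z_entry d n (U : 'M[C]_(d, n)) (rho : 'M[C]_(d * d)) i j :
  ZGammaK U rho i j = \sum_p1 \sum_p2 \sum_q1 \sum_q2
    ((U p1 i)^* * U p2 i * rho (ix p1 q2) (ix q1 p2) * (U q1 j * (U q2 j)^*)).
Proof.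
rewrite /ZGammaK mxE.
under eq_bigr do rewrite mxE mulr_suml.
rewrite exchange_big sum_tens.
apply: eq_bigr => p1 _; apply: eq_bigr => p2 _.
rewrite sum_tens; apply: eq_bigr => q1 _; apply: eq_bigr => q2 _.
rewrite Kmx_ix adjmxE Kmx_ix /ptrans mxE !mxtens_indexK /= rmorphM /= conjCK.
ring.
Qed.

Lemma quad_entry d (rho : 'M[C]_(d * d)) (w : 'cV[C]_(d * d)) :
  (adjmx w *m rho *m w) 0 0 = \sum_p1 \sum_p2 \sum_q1 \sum_q2
    ((w (ix p1 p2) 0)^* * rho (ix p1 p2) (ix q1 q2) * w (ix q1 q2) 0).
Proof.
rewrite mxE.
under eq_bigr do rewrite mxE mulr_suml.
rewrite exchange_big sum_tens.
apply: eq_bigr => p1 _; apply: eq_bigr => p2 _.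
rewrite sum_tens; apply: eq_bigr => q1 _; apply: eq_bigr => q2 _.
by rewrite adjmxE.
Qed.

End Aux.

Theorem mainTheorem11 (C : numClosedFieldType) (n d : nat) (hnd : (n <= d)%N)
  (U : 'M[C]_(d, n)) (hU : orthonormal_cols U)
  (rho : 'M[C]_(d * d)) (hrho : PPT rho) (hsym : range_in_sym rho) :
  DNN (ZGammaK U rho).
Proof.
case: hrho => hpsd hpt; split; first exact: psd_congr.
move=> i j.
pose w : 'cV[C]_(d * d) :=
  \col_k (U (mxtens_unindex k).1 i * U (mxtens_unindex k).2 j).
have := hpsd.2 w.
rewrite quad_entry Z_entry.
suff -> : \sum_p1 \sum_p2 \sum_q1 \sum_q2
    ((U p1 i)^* * U p2 i * rho (ix p1 q2) (ix q1 p2) * (U q1 j * (U q2 j)^*))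
  = \sum_p1 \sum_p2 \sum_q1 \sum_q2
    ((w (ix p1 p2) 0)^* * rho (ix p1 p2) (ix q1 q2) * w (ix q1 q2) 0) by [].
transitivity (\sum_p1 \sum_p2 \sum_q2 \sum_q1
    ((U p1 i)^* * U p2 i * rho (ix p1 q2) (ix q1 p2) * (U q1 j * (U q2 j)^*)) : C).
  by apply: eq_bigr => p1 _; apply: eq_bigr => p2 _; rewrite exchange_big.
apply: eq_bigr => p1 _; rewrite exchange_big.
apply: eq_bigr => q2 _; apply: eq_bigr => p2 _; apply: eq_bigr => q1 _.
rewrite (@rho_swap C d rho hpsd hsym) !mxE !mxtens_indexK /= rmorphM /=.
ring.
Qed.
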